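(* Let $a,b\in\mathbb{Q}$ be such that $g(x)=x^4+ax^2+b$ is irreducible over $\mathbb{Q}$, and let $\theta$ be a root of $g(x)$. Then for every $r\in\mathbb{Q}\setminus\mathbb{Q}^2$, we have $r\in\mathbb{Q}(\theta)^2$ if and only if at least one of $r(a^2-4b)$, $r(-a+2\sqrt{b})$, $r(-a-2\sqrt{b})$ lies in $\mathbb{Q}^2$.
   Context: For a field $K$, $K^2$ denotes the set of squares in $K$; $\mathbb{Q}^2$ is the set of rational squares. $\sqrt{b}$ denotes a fixed complex square root of $b$. *)

(* Defs.v *)
From HB Require Import structures.
From mathcomp Require Import all_boot all_order all_algebra all_field.
Set Implicit Arguments. Unset Strict Implicit. Unset Printing Implicit Defensive.
Import Order.TTheory GRing.Theory Num.Theory.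
Local Open Scope ring_scope.

Definition quartic (a b : rat) : {poly rat} := 'X^4 + a%:P * 'X^2 + b%:P.

(* Q(theta) inside algC: the field generated by theta over Q, i.e. all
   quotients p(theta)/q(theta) with p, q rational polynomials, q(theta) <> 0. *)
Definition in_Qadj (theta x : algC) : Prop :=
  exists p q : {poly rat},
      (map_poly ratr q).[theta] != 0 /\
      x = (map_poly ratr p).[theta] / (map_poly ratr q).[theta].

Definition square_in_Qadj (theta x : algC) : Prop :=
  exists y, in_Qadj theta y /\ x = y ^+ 2.

Definition in_rat_squares (x : algC) : Prop :=
  exists q : rat, x = ratr (q ^+ 2).

(* Main.v *)
Require Import Defs.
From HB Require Import structures.
From mathcomp Require Import all_boot all_order all_algebra all_field.
From mathcomp Require Import ring lra.
Import Order.TTheory GRing.Theory Num.Theory.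
Local Open Scope ring_scope.

Lemma size_g5 a b : size (quartic a b) = 5%N.
Proof.
rewrite /quartic -addrA size_addl size_polyXn //.
apply: leq_ltn_trans (size_add _ _) _; rewrite gtn_max.
rewrite mul_polyC.
rewrite (leq_ltn_trans (size_polyC_leq1 _)) // andbT.
by rewrite (leq_ltn_trans (size_scale_leq _ _)) // size_polyXn.
Qed.

Lemma sub_eq {R : comNzRingType} {X Y Z : R} : Z = 0 -> X - Y = Z -> X = Y.
Proof. by move=> -> /eqP; rewrite subr_eq0 => /eqP. Qed.

Section S.
Variables (a b : rat) (theta : algC).
Hypothesis Hirr : irreducible_poly (quartic a b).
Hypothesis Hroot : root (map_poly ratr (quartic a b)) theta.

Lemma gcd_case h : size (gcdp (quartic a b) h) != 1%N -> quartic a b %| h.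
Proof.
case: Hirr => sz irr G1.
have := irr _ G1 (dvdp_gcdl _ _) => E.
by rewrite -(eqp_dvdl _ E) dvdp_gcdr.
Qed.

Lemma core h : root (map_poly ratr h) theta -> quartic a b %| h.
Proof.
move=> rh; apply: gcd_case.
have rG : root (map_poly ratr (gcdp (quartic a b) h)) theta.
  by rewrite gcdp_map root_gcd Hroot rh.
apply/negP => /size_poly1P [c c0 Ec].
by move: rG; rewrite Ec map_polyC rootC /= fmorph_eq0 (negbTE c0).
Qed.

Lemma nofact s t : a = s + t -> b = s * t -> False.
Proof.
move=> ea eb; case: Hirr => sz irr.
have E : quartic a b = ('X^2 + s%:P) * ('X^2 + t%:P).
  rewrite /quartic ea eb polyCD polyCM. ring.
have S3 : size ('X^2 + s%:P) = 3%N by rewrite size_XnaddC.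
have := irr ('X^2 + s%:P); rewrite S3 => /(_ isT).
rewrite E dvdp_mulr // => /(_ isT) /eqp_size.
by rewrite -E S3 size_g5.
Qed.

Lemma L4 (c0 c1 c2 c3 : rat) :
  ratr c0 + ratr c1 * theta + ratr c2 * theta ^+ 2 + ratr c3 * theta ^+ 3 = 0 ->
  [/\ c0 = 0, c1 = 0, c2 = 0 & c3 = 0].
Proof.
move=> E; set h := Poly [:: c0; c1; c2; c3].
have sh : (size h <= 4)%N by apply: size_Poly.
have rh : root (map_poly ratr h) theta.
  rewrite /root (horner_coef_wide _ (n := 4)); last by rewrite size_map_poly.
  rewrite !big_ord_recr big_ord0 /= !coef_map !coef_Poly /=.
  by rewrite expr0 expr1 mulr1 add0r E.
have h0 : h = 0.
  apply/eqP; apply/negPn/negP => nz; have := dvdp_leq nz (core _ rh).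
  by rewrite size_g5 => /leq_trans /(_ sh).
have := congr1 (fun p : {poly rat} => p`_0) h0; have := congr1 (fun p : {poly rat} => p`_1) h0.
have := congr1 (fun p : {poly rat} => p`_2) h0; have := congr1 (fun p : {poly rat} => p`_3) h0.
by rewrite /= !coef_Poly !coef0 /=.
Qed.

Lemma polyform y : in_Qadj theta y -> exists x0 x1 x2 x3 : rat,
  y = ratr x0 + ratr x1 * theta + ratr x2 * theta ^+ 2 + ratr x3 * theta ^+ 3.
Proof.
case=> p [q [nz ->]].
have cop : coprimep (quartic a b) q.
  apply/negPn/negP => ncop; move: nz; have := gcd_case _ ncop.
  move/divpK => <-; by rewrite rmorphM hornerM (eqP Hroot) mulr0 eqxx.
have [[u v] /= E] := Bezout_eq1_coprimepP _ _ cop.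
have Ev : (map_poly ratr v).[theta] * (map_poly ratr q).[theta] = 1.
  have := congr1 (fun P => (map_poly ratr P).[theta]) E.
  by rewrite /= !rmorphD !rmorphM /= !hornerD !hornerM (eqP Hroot) mulr0 add0r rmorph1 hornerC.
have -> : (map_poly ratr p).[theta] / (map_poly ratr q).[theta] =
          (map_poly ratr ((p * v) %% quartic a b)).[theta].
  have Ei : (map_poly ratr q).[theta]^-1 = (map_poly ratr v).[theta].
    by rewrite -[LHS]mul1r -Ev mulrK // unitfE.
  rewrite Ei -hornerM -rmorphM {1}(divp_eq (p * v) (quartic a b)).
  by rewrite rmorphD rmorphM /= hornerD hornerM (eqP Hroot) mulr0 add0r.
set w := (p * v) %% quartic a b.
have sw : (size w <= 4)%N.
  by have := ltn_modp (p * v) (quartic a b); rewrite size_g5 irredp_neq0.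
exists w`_0, w`_1, w`_2, w`_3.
rewrite (horner_coef_wide _ (n := 4)); last by rewrite size_map_poly.
rewrite !big_ord_recr big_ord0 /= !coef_map /=.
by rewrite expr0 expr1 mulr1 add0r.
Qed.

Lemma hth : theta ^+ 4 + ratr a * theta ^+ 2 + ratr b = 0.
Proof.
move: Hroot; rewrite /root /quartic !rmorphD !rmorphM /= !map_polyC !map_polyX !(hornerD, hornerM, hornerX, hornerC).
move/eqP => E; rewrite -[RHS]E; ring.
Qed.

Lemma dns s : s ^+ 2 <> a ^+ 2 - 4 * b.
Proof.
move=> E; apply: (@nofact ((a - s) / 2) ((a + s) / 2)).
  by field.
have -> : b = (a ^+ 2 - s ^+ 2) / 4 by rewrite E; field.
by field.
Qed.

Lemma bnz : b <> 0.
Proof. by move=> b0; apply: (@dns a); rewrite b0 mulr0 subr0. Qed.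

Lemma sqd : (2 * theta ^+ 2 + ratr a) ^+ 2 = ratr (a ^+ 2 - 4 * b).
Proof.
have := hth => E.
transitivity ((2 * theta ^+ 2 + ratr a) ^+ 2 - 4 * (theta ^+ 4 + ratr a * theta ^+ 2 + ratr b)).
  by rewrite E mulr0 subr0.
ring.
Qed.

Lemma forward r : ~ (exists q : rat, r = q ^+ 2) ->
  square_in_Qadj theta (ratr r) ->
  [\/ in_rat_squares (ratr r * ratr (a ^+ 2 - 4 * b)),
      in_rat_squares (ratr r * (- ratr a + 2 * sqrtC (ratr b))) |
      in_rat_squares (ratr r * (- ratr a - 2 * sqrtC (ratr b)))].
Proof.
move=> nsq [y [/polyform [x0 [x1 [x2 [x3 Ey]]]] Ery]].
have := @L4 (x0 ^+ 2 - b * x2 ^+ 2 - 2 * b * x1 * x3 + a * b * x3 ^+ 2 - r)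
  (2 * (x0 * x1 - b * x2 * x3))
  (2 * x0 * x2 - a * x2 ^+ 2 + x1 ^+ 2 - 2 * a * x1 * x3 + (a ^+ 2 - b) * x3 ^+ 2)
  (2 * (x0 * x3 + x1 * x2 - a * x2 * x3)).
case.
  have E := hth.
  transitivity (y ^+ 2 - ratr r - (ratr x3 ^+ 2 * theta ^+ 2 + 2 * ratr x2 * ratr x3 * theta
     + (ratr x2 ^+ 2 + 2 * ratr x1 * ratr x3 - ratr a * ratr x3 ^+ 2)) *
     (theta ^+ 4 + ratr a * theta ^+ 2 + ratr b)).
    rewrite Ey; ring.
  by rewrite E mulr0 -Ery subrr subr0.
move=> c0 c1 c2 c3.
have c1' : x0 * x1 - b * x2 * x3 = 0.
  by move/eqP: c1; rewrite mulf_eq0 pnatr_eq0 /= => /eqP.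
have c3' : x0 * x3 + x1 * x2 - a * x2 * x3 = 0.
  by move/eqP: c3; rewrite mulf_eq0 pnatr_eq0 /= => /eqP.
have rnz : r != 0 by apply/eqP => r0; apply: nsq; exists 0; rewrite r0 expr0n.
pose N := x1 ^+ 2 - a * x1 * x3 + b * x3 ^+ 2.
have [N0|Nn0] := eqVneq N 0.
  have x30 : x3 = 0.
    apply/eqP; apply/negPn/negP => nz; apply: (@dns (2 * x1 / x3 - a)).
    have -> : (2 * x1 / x3 - a) ^+ 2 = a ^+ 2 - 4 * b + 4 * N / x3 ^+ 2.
      by rewrite /N; field.
    by rewrite N0 mulr0 mul0r addr0.
  have x10 : x1 = 0.
    by apply/eqP; rewrite -sqrf_eq0; move: N0; rewrite /N x30 expr0n /= !mulr0 !addr0 => ->.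
  subst x1 x3.
  have Er : r = x0 ^+ 2 - b * x2 ^+ 2 by apply/esym; apply: (sub_eq c0); ring.
  have x2nz : x2 != 0.
    by apply/eqP => x20; apply: nsq; exists x0; rewrite Er x20 expr0n /= mulr0 subr0.
  have Ex0 : x0 = a * x2 / 2.
    have : x2 * (2 * x0 - a * x2) = 0 by rewrite -c2; ring.
    move/eqP; rewrite mulf_eq0 (negbTE x2nz) /= => /eqP H0.
    apply: (sub_eq (Z := (2 * x0 - a * x2) / 2)); [by rewrite H0 mul0r | by field].
  apply: Or31; exists (x2 * (a ^+ 2 - 4 * b) / 2).
  by rewrite -rmorphM; congr ratr; rewrite Er Ex0; field.
have x00 : x0 = 0.
  have : x0 * N = (x1 - a * x3) * (x0 * x1 - b * x2 * x3) + b * x3 * (x0 * x3 + x1 * x2 - a * x2 * x3).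
    by rewrite /N; ring.
  rewrite c1' c3' !mulr0 addr0 => /eqP; rewrite mulf_eq0 (negbTE Nn0) orbF => /eqP //.
have x20 : x2 = 0.
  have : x2 * N = x1 * (x0 * x3 + x1 * x2 - a * x2 * x3) - x3 * (x0 * x1 - b * x2 * x3).
    by rewrite /N; ring.
  rewrite c1' c3' !mulr0 subr0 => /eqP; rewrite mulf_eq0 (negbTE Nn0) orbF => /eqP //.
subst x0 x2.
have x3nz : x3 != 0.
  apply/eqP => x30; move: Nn0; rewrite /N x30.
  have : x1 ^+ 2 = 0 by rewrite -c2 x30; ring.
  by move=> ->; rewrite !expr0n /= !mulr0 !addr0 eqxx.
have [e He] : exists e, e = (x1 - a * x3) / x3 by exists ((x1 - a * x3) / x3).
have Ex1 : x1 = e * x3 + a * x3 by rewrite He; field => //.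
have Eb : b = e ^+ 2.
  apply/esym/(sub_eq (Z := (2 * 0 * 0 - a * 0 ^+ 2 + x1 ^+ 2 - 2 * a * x1 * x3 + (a ^+ 2 - b) * x3 ^+ 2) / x3 ^+ 2)).
    by rewrite c2 mul0r.
  by rewrite He; field.
have Er : r = - 2 * b * x1 * x3 + a * b * x3 ^+ 2 by apply/esym; apply: (sub_eq c0); ring.
have Hrat : r * (- a - 2 * e) = (e * x3 * (a + 2 * e)) ^+ 2.
  by rewrite Er Ex1 Eb; ring.
have : sqrtC (ratr b) ^+ 2 == ratr e ^+ 2 :> algC by rewrite sqrtCK Eb rmorphXn.
rewrite eqf_sqr => /orP [] /eqP ->.
  apply: Or33; exists (e * x3 * (a + 2 * e)); rewrite -Hrat; ring.
apply: Or32; exists (e * x3 * (a + 2 * e)); rewrite -Hrat; ring.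
Qed.

Lemma back1 r q : ratr r * ratr (a ^+ 2 - 4 * b) = ratr (q ^+ 2) :> algC ->
  square_in_Qadj theta (ratr r).
Proof.
move=> H.
have dnz : a ^+ 2 - 4 * b != 0 by apply/eqP => d0; apply: (@dns 0); rewrite d0 expr0n.
have Dnz : ratr (a ^+ 2 - 4 * b) != 0 :> algC by rewrite fmorph_eq0.
have Pnz : 2 * theta ^+ 2 + ratr a != 0.
  by apply/eqP => P0; move: Dnz; rewrite -sqd P0 expr0n eqxx.
have Ev : (map_poly ratr (2%:P * 'X^2 + a%:P)).[theta] = 2 * theta ^+ 2 + ratr a :> algC.
  rewrite rmorphD rmorphM /= !map_polyC map_polyXn !(hornerD, hornerM, hornerC, hornerXn).
  by rewrite !hornerX; ring.
exists (ratr q / (2 * theta ^+ 2 + ratr a)); split.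
  exists q%:P, (2%:P * 'X^2 + a%:P); rewrite Ev map_polyC hornerC; split => //.
rewrite expr_div_n sqd; apply: (mulIf Dnz); rewrite divfK // H; exact: rmorphXn.
Qed.

Lemma back2 r q c : r != 0 -> c ^+ 2 = b -> r * (- a + 2 * c) = q ^+ 2 ->
  square_in_Qadj theta (ratr r).
Proof.
move=> rnz Ec H.
have knz : - a + 2 * c != 0.
  apply/eqP => k0; apply: (@nofact c c); last by rewrite -Ec.
  by apply/esym; apply: (sub_eq k0); ring.
have Knz : ratr (- a + 2 * c) != 0 :> algC by rewrite fmorph_eq0.
have tnz : theta != 0.
  apply/eqP => t0; have := hth; rewrite t0 !expr0n /= mulr0 !add0r => /eqP.
  by rewrite fmorph_eq0 => /eqP; apply: bnz.
have Eb : ratr b = ratr c ^+ 2 :> algC by rewrite -Ec rmorphXn.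
have key : (theta ^+ 2 + ratr c) ^+ 2 = ratr (- a + 2 * c) * theta ^+ 2.
  transitivity (ratr (- a + 2 * c) * theta ^+ 2 + (theta ^+ 4 + ratr a * theta ^+ 2 + ratr b)).
    rewrite Eb; ring.
  by rewrite hth addr0.
have Pnz : theta ^+ 2 + ratr c != 0.
  apply/eqP => P0; move: key; rewrite P0 expr0n => /esym/eqP.
  by rewrite mulf_eq0 (negbTE Knz) expf_eq0 (negbTE tnz).
have Ev : (map_poly ratr ('X^2 + c%:P)).[theta] = theta ^+ 2 + ratr c :> algC.
  by rewrite rmorphD /= !map_polyC map_polyXn !(hornerD, hornerC, hornerXn).
have Ep : (map_poly ratr (q%:P * 'X)).[theta] = ratr q * theta :> algC.
  by rewrite rmorphM /= !map_polyC map_polyX !(hornerM, hornerC, hornerX).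
exists (ratr q * theta / (theta ^+ 2 + ratr c)); split.
  by exists (q%:P * 'X), ('X^2 + c%:P); rewrite Ev Ep.
have Hr : ratr r = ratr (q ^+ 2) / ratr (- a + 2 * c) :> algC.
  by rewrite -H rmorphM mulfK.
rewrite expr_div_n key Hr.
field; rewrite tnz /=; apply: contra Knz => /eqP E; apply/eqP; rewrite -E; ring.
Qed.
End S.

Theorem lemma3p2 (a b : rat) (theta : algC) :
  irreducible_poly (quartic a b) ->
  root (map_poly ratr (quartic a b)) theta ->
  forall r : rat, ~ (exists q : rat, r = q ^+ 2) ->
    (square_in_Qadj theta (ratr r) <->
       [\/ in_rat_squares (ratr r * ratr (a ^+ 2 - 4 * b)),
           in_rat_squares (ratr r * (- ratr a + 2 * sqrtC (ratr b))) |
           in_rat_squares (ratr r * (- ratr a - 2 * sqrtC (ratr b)))]).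
Proof.
move=> Hirr Hroot r nsq; split; first exact: forward.
have rnz : r != 0 by apply/eqP => r0; apply: nsq; exists 0; rewrite r0 expr0n.
have Rnz : ratr r != 0 :> algC by rewrite fmorph_eq0.
case=> [[q Hq]|[q Hq]|[q Hq]]; first exact: (@back1 a b theta Hirr Hroot r q Hq).
- pose c := (q ^+ 2 / r + a) / 2.
  have Es : sqrtC (ratr b) = ratr c :> algC.
    transitivity ((ratr r * (- ratr a + 2 * sqrtC (ratr b)) / ratr r + ratr a) / 2 : algC).
      by field.
    by rewrite Hq /c; field; exact: Rnz.
  have Ec : c ^+ 2 = b.
    apply: (fmorph_inj (@ratr algC)); transitivity (ratr c ^+ 2 : algC); first by ring.
    by rewrite -Es sqrtCK.
  apply: (@back2 a b theta Hirr Hroot r q c rnz Ec); apply: (fmorph_inj (@ratr algC)).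
  transitivity (ratr r * (- ratr a + 2 * ratr c) : algC); first by ring.
  by rewrite -Es.
- pose c := (q ^+ 2 / r + a) / 2.
  have Es : - sqrtC (ratr b) = ratr c :> algC.
    transitivity ((ratr r * (- ratr a - 2 * sqrtC (ratr b)) / ratr r + ratr a) / 2 : algC).
      by field.
    by rewrite Hq /c; field; exact: Rnz.
  have Ec : c ^+ 2 = b.
    apply: (fmorph_inj (@ratr algC)); transitivity (ratr c ^+ 2 : algC); first by ring.
    by rewrite -Es sqrrN sqrtCK.
  apply: (@back2 a b theta Hirr Hroot r q c rnz Ec); apply: (fmorph_inj (@ratr algC)).
  transitivity (ratr r * (- ratr a + 2 * ratr c) : algC); first by ring.
  by rewrite -Es mulrN.
Qed.
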